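(* Let $a,a^\dagger$ be the annihilation and creation operators of the harmonic oscillator, $[a,a^\dagger]=1$, with vacuum $|0\rangle$ ($a|0\rangle=0$, $\langle0|a^\dagger=0$, $\langle0|0\rangle=1$). For positive integers $n$ let $A_n^\dagger$ act on the formal span of $\{(a^\dagger)^m|0\rangle\}_{m\ge0}$ by $A_n^\dagger(a^\dagger)^m|0\rangle=\frac{m!}{(mn)!}(a^\dagger)^{mn}|0\rangle$, and let $A_n$ act from the right on the formal span of $\{\langle0|a^m\}_{m\ge0}$ by $\langle0|a^mA_n=\langle0|a^{mn}$. For a prime $p$ and $\mathrm{Re}(s)>1$ let $$\zeta_p(s):=\frac{1}{p!}\langle0|\,a^p\,\frac{1}{1-(a^\dagger a)^{-s}}\,(a^\dagger)^p\,|0\rangle .$$ Then $$\zeta_p(s)=\langle0|\,a\Big(\frac{1}{1-A_p}\Big)(a^\dagger a)^{-s}\Big(\frac{1}{1-A_p^\dagger}\Big)a^\dagger\,|0\rangle .$$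
   Context: The number states $|n\rangle=(a^\dagger)^n|0\rangle/\sqrt{n!}$ are orthonormal; for a function $f$, $f(a^\dagger a)|n\rangle=f(n)|n\rangle$ for $n\ge1$, so $(a^\dagger a)^{-s}|n\rangle=n^{-s}|n\rangle$ and $\frac{1}{1-(a^\dagger a)^{-s}}|n\rangle=\frac{1}{1-n^{-s}}|n\rangle$ ($n\ge2$). Here $\frac{1}{1-A_p^\dagger}:=\sum_{k\ge0}(A_p^\dagger)^k$ and $\frac{1}{1-A_p}:=\sum_{k\ge0}A_p^k$, applied formally and paired termwise. *)

(* Defs.v *)
From Stdlib Require Import Reals Arith ZArith Znumtheory.
From Coquelicot Require Import Coquelicot.
Open Scope R_scope.

(* A ket is a formal (possibly infinite) combination  sum_m v m (a^dag)^m |0>,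
   represented by its coefficient function (unnormalized basis). *)
Definition Ket := nat -> C.
(* A bra is a formal combination  sum_m b m <0| a^m. *)
Definition Bra := nat -> C.

(* the basis vector (a^dag)^m |0>  (resp. <0| a^m) *)
Definition basis (m : nat) : nat -> C :=
  fun k => if Nat.eqb k m then RtoC 1 else RtoC 0.

Definition is_cseries (a : nat -> C) (l : C) : Prop :=
  is_series (fun n => Re (a n)) (Re l) /\ is_series (fun n => Im (a n)) (Im l).
Definition ex_cseries (a : nat -> C) : Prop := exists l, is_cseries a l.
Definition CSeries (a : nat -> C) : C :=
  (Series (fun n => Re (a n)), Series (fun n => Im (a n))).

(* pairing:  <0| a^m (a^dag)^n |0> = delta_{mn} m!  (consequence of [a,a^dag]=1,
   a|0>=0, <0|0>=1) *)
Definition braket (b : Bra) (v : Ket) : C :=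
  CSeries (fun m => Cmult (Cmult (b m) (v m)) (RtoC (INR (fact m)))).

Definition cpowR (x : R) (z : C) : C :=
  (exp (Re z * ln x) * cos (Im z * ln x), exp (Re z * ln x) * sin (Im z * ln x)).

(* (a^dag a)^{-s} : acts on (a^dag)^m|0> by m^{-s}   (meaningful for m >= 1) *)
Definition num_pow (s : C) (v : Ket) : Ket :=
  fun m => Cmult (cpowR (INR m) (Copp s)) (v m).

(* 1/(1-(a^dag a)^{-s}) : acts on (a^dag)^m|0> by 1/(1-m^{-s})  (meaningful for m >= 2) *)
Definition num_resolvent (s : C) (v : Ket) : Ket :=
  fun m => Cmult (Cinv (Cminus (RtoC 1) (cpowR (INR m) (Copp s)))) (v m).

(* A_n^dag (a^dag)^m |0> = m!/(mn)! (a^dag)^{mn} |0>, extended linearly (n >= 1) *)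
Definition A_dag (n : nat) (v : Ket) : Ket :=
  fun k => if Nat.eqb (k mod n)%nat 0
           then Cmult (v (k / n)%nat) (RtoC (INR (fact (k / n)%nat) / INR (fact k)))
           else RtoC 0.

(* <0| a^m A_n = <0| a^{mn}, extended linearly (n >= 1) *)
Definition A_right (n : nat) (b : Bra) : Bra :=
  fun k => if Nat.eqb (k mod n)%nat 0 then b (k / n)%nat else RtoC 0.

Definition zeta_p (p : nat) (s : C) : C :=
  Cmult (RtoC (/ INR (fact p))) (braket (basis p) (num_resolvent s (basis p))).

(* the (j,k) term of  <0| a (sum_j A_p^j) (a^dag a)^{-s} (sum_k (A_p^dag)^k) a^dag |0>,
   paired termwise *)
Definition rhs_term (p : nat) (s : C) (j k : nat) : C :=
  braket (Nat.iter j (A_right p) (basis 1%nat))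
         (num_pow s (Nat.iter k (A_dag p) (basis 1%nat))).

(* Main.v *)
Require Import Defs.
From Stdlib Require Import Reals Arith ZArith Znumtheory Lia Lra FunctionalExtensionality.
From Coquelicot Require Import Coquelicot.
Open Scope R_scope.

Fixpoint psum (a : nat -> C) (n : nat) : C :=
  match n with O => a O | S n => Cplus (psum a n) (a (S n)) end.

Lemma psum_Re a n : sum_n (fun k => Re (a k)) n = Re (psum a n).
Proof.
  induction n. - rewrite sum_O. reflexivity.
  - rewrite sum_Sn, IHn. simpl. reflexivity.
Qed.
Lemma psum_Im a n : sum_n (fun k => Im (a k)) n = Im (psum a n).
Proof.
  induction n. - rewrite sum_O. reflexivity.
  - rewrite sum_Sn, IHn. simpl. reflexivity.
Qed.

Lemma lim_of_dist (u e : nat -> R) (l : R) :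
  (forall n, Rabs (u n - l) <= e n) -> is_lim_seq e 0 -> is_lim_seq u l.
Proof.
  intros H He.
  apply is_lim_seq_le_le with (u := fun n => l + - e n) (w := fun n => l + e n).
  - intro n. specialize (H n). apply Rabs_le_between in H. lra.
  - replace (Finite l) with (Finite (l + - 0)) by (f_equal; ring).
    apply is_lim_seq_plus'. apply is_lim_seq_const.
    apply (is_lim_seq_opp e 0) in He. simpl in He. 
    exact He.
  - replace (Finite l) with (Finite (l + 0)) by (f_equal; ring).
    apply is_lim_seq_plus'. apply is_lim_seq_const. exact He.
Qed.

Lemma im_le_Cmod (c : C) : Rabs (Im c) <= Cmod c.
Proof.
  unfold Cmod. rewrite <- sqrt_Rsqr_abs. apply sqrt_le_1_alt.
  unfold Rsqr. destruct c as [x y]; simpl. nra.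
Qed.

Lemma cs_lim (a : nat -> C) (l : C) :
  is_lim_seq (fun n => Cmod (Cminus (psum a n) l)) 0 -> is_cseries a l.
Proof.
  intro H. split; unfold is_series.
  - refine (lim_of_dist _ _ (Re l) _ H). intro n. rewrite psum_Re.
    eapply Rle_trans; [|apply re_le_Cmod]. right. f_equal.
  - refine (lim_of_dist _ _ (Im l) _ H). intro n. rewrite psum_Im.
    eapply Rle_trans; [|apply im_le_Cmod]. right. f_equal.
Qed.
Lemma CSeries_eq a l : is_cseries a l -> CSeries a = l.
Proof.
  intros [H1 H2]. unfold CSeries.
  rewrite (is_series_unique _ _ H1), (is_series_unique _ _ H2).
  destruct l; reflexivity.
Qed.

Definition single (i : nat) (x : C) : nat -> C :=
  fun m => if Nat.eqb m i then x else RtoC 0.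

Lemma psum_single i x n : psum (single i x) n = if Nat.ltb n i then RtoC 0 else x.
Proof.
  induction n; simpl.
  - unfold single. destruct i; simpl; reflexivity.
  - rewrite IHn. unfold single.
    destruct (Nat.ltb_spec n i); destruct (Nat.ltb_spec (S n) i);
    destruct (Nat.eqb_spec (S n) i); try lia; subst; apply injective_projections; simpl; ring.
Qed.

Lemma single_cs i x : is_cseries (single i x) x.
Proof.
  apply cs_lim. apply (is_lim_seq_incr_n _ i).
  apply is_lim_seq_ext with (u := fun _ => 0). 2: apply is_lim_seq_const.
  intro n. rewrite psum_single.
  destruct (Nat.ltb_spec (n + i) i); try lia.
  replace (Cminus x x) with (RtoC 0) by (apply injective_projections; simpl; ring).
  rewrite Cmod_0. reflexivity.
Qed.

Lemma geom_cs (W : C) : Cmod W < 1 ->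
  is_cseries (fun j => Cpow W j) (Cinv (Cminus (RtoC 1) W)).
Proof.
  intro HW.
  assert (Hne : Cminus (RtoC 1) W <> RtoC 0).
  { intro E. assert (W = RtoC 1).
    { apply (f_equal (fun z => Cminus (RtoC 1) z)) in E.
      replace (Cminus 1 (Cminus 1 W)) with W in E by ring. rewrite E. ring. }
    subst. rewrite Cmod_1 in HW. lra. }
  assert (Hp : forall n, Cmult (psum (fun j => Cpow W j) n) (Cminus (RtoC 1) W)
                         = Cminus (RtoC 1) (Cpow W (S n))).
  { induction n.
    - simpl. ring.
    - simpl psum. rewrite Cmult_plus_distr_r, IHn. rewrite !Cpow_S. ring. }
  apply cs_lim.
  apply is_lim_seq_ext with
    (u := fun n => Cmod W ^ (S n) * / Cmod (Cminus (RtoC 1) W)).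
  - intro n.
    replace (Cminus (psum (fun j => Cpow W j) n) (Cinv (Cminus 1 W)))
      with (Cmult (Copp (Cpow W (S n))) (Cinv (Cminus 1 W))).
    + rewrite Cmod_mult, Cmod_inv by exact Hne. rewrite Cmod_opp, Cmod_pow. reflexivity.
    + specialize (Hp n).
      replace (psum (fun j => Cpow W j) n) with
        (Cmult (Cmult (psum (fun j => Cpow W j) n) (Cminus 1 W)) (Cinv (Cminus 1 W)))
        by (field; exact Hne).
      rewrite Hp. field. exact Hne.
  - replace (Finite 0) with (Rbar_mult 0 (/ Cmod (Cminus 1 W))) by (simpl; f_equal; ring).
    apply is_lim_seq_scal_r.
    apply is_lim_seq_ext with (u := fun n => Cmod W ^ (n + 1)).
    { intro n. f_equal. lia. }
    apply (is_lim_seq_incr_n (fun n => Cmod W ^ n) 1).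
    apply is_lim_seq_geom. rewrite Rabs_pos_eq by apply Cmod_ge_0. exact HW.
Qed.

Lemma cpowR_mult x y z : 0 < x -> 0 < y ->
  cpowR (x * y) z = Cmult (cpowR x z) (cpowR y z).
Proof.
  intros Hx Hy. unfold cpowR. rewrite ln_mult by assumption.
  rewrite !Rmult_plus_distr_l, exp_plus, cos_plus, sin_plus.
  apply injective_projections; simpl; ring.
Qed.

Lemma cpowR_1 z : cpowR 1 z = RtoC 1.
Proof.
  unfold cpowR. rewrite ln_1, !Rmult_0_r, exp_0, cos_0, sin_0.
  apply injective_projections; simpl; ring.
Qed.

Lemma cpowR_pow x z j : 0 < x -> cpowR (x ^ j) z = Cpow (cpowR x z) j.
Proof.
  intro Hx. induction j.
  - simpl. apply cpowR_1.
  - simpl pow. rewrite cpowR_mult by (try apply pow_lt; assumption).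
    rewrite IHj. reflexivity.
Qed.

Lemma Cmod_cpowR x z : Cmod (cpowR x z) = exp (Re z * ln x).
Proof.
  unfold cpowR, Cmod. cbn [fst snd].
  set (a := exp (Re z * ln x)). set (t := Im z * ln x).
  replace ((a * cos t) ^ 2 + (a * sin t) ^ 2) with (Rsqr a).
  - apply sqrt_Rsqr. left. apply exp_pos.
  - unfold Rsqr. pose proof (sin2_cos2 t). unfold Rsqr in H. nra.
Qed.

Lemma A_right_basis p m : (0 < p)%nat -> A_right p (basis m) = basis (m * p).
Proof.
  intro Hp. apply functional_extensionality. intro k. unfold A_right, basis.
  destruct (Nat.eqb_spec k (m * p)).
  - subst k. rewrite Nat.mod_mul, Nat.div_mul by lia. rewrite !Nat.eqb_refl. reflexivity.
  - destruct (Nat.eqb_spec (k mod p) 0); [|reflexivity].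
    destruct (Nat.eqb_spec (k / p) m); [|reflexivity].
    exfalso. apply n. pose proof (Nat.div_mod k p). subst m. nia.
Qed.

Lemma A_dag_single p m c : (0 < p)%nat ->
  A_dag p (single m c) =
  single (m * p) (Cmult c (RtoC (INR (fact m) / INR (fact (m * p))))).
Proof.
  intro Hp. apply functional_extensionality. intro k. unfold A_dag, single.
  destruct (Nat.eqb_spec k (m * p)).
  - subst k. rewrite Nat.mod_mul, Nat.div_mul by lia. rewrite !Nat.eqb_refl. reflexivity.
  - destruct (Nat.eqb_spec (k mod p) 0); [|reflexivity].
    destruct (Nat.eqb_spec (k / p) m).
    + exfalso. apply n. pose proof (Nat.div_mod k p). subst m. nia.
    + apply Cmult_0_l.
Qed.

Lemma iter_A_right p j : (0 < p)%nat ->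
  Nat.iter j (A_right p) (basis 1) = basis (p ^ j).
Proof.
  intro Hp. induction j.
  - reflexivity.
  - simpl Nat.iter. rewrite IHj, A_right_basis by exact Hp. f_equal.
    rewrite Nat.pow_succ_r'. apply Nat.mul_comm.
Qed.

Lemma iter_A_dag p k : (0 < p)%nat ->
  Nat.iter k (A_dag p) (basis 1) = single (p ^ k) (RtoC (/ INR (fact (p ^ k)))).
Proof.
  intro Hp. induction k.
  - simpl. apply functional_extensionality. intro m. unfold basis, single.
    simpl. rewrite Rinv_1. reflexivity.
  - simpl Nat.iter. rewrite IHk, A_dag_single by exact Hp.
    replace (p ^ k * p)%nat with (p ^ S k)%nat by (rewrite Nat.pow_succ_r'; apply Nat.mul_comm).
    f_equal. rewrite <- RtoC_mult. f_equal.
    pose proof (INR_fact_neq_0 (p ^ k)). pose proof (INR_fact_neq_0 (p ^ S k)).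
    field. split; assumption.
Qed.

Lemma rhs_term_val p s j k : (1 < p)%nat ->
  rhs_term p s j k = if Nat.eqb k j then cpowR (INR (p ^ j)) (Copp s) else RtoC 0.
Proof.
  intro Hp. unfold rhs_term.
  rewrite iter_A_right, iter_A_dag by lia. unfold braket.
  apply CSeries_eq.
  replace (fun m => Cmult (Cmult (basis (p ^ j) m)
            (num_pow s (single (p ^ k) (RtoC (/ INR (fact (p ^ k))))) m))
            (RtoC (INR (fact m))))
    with (single (p ^ j) (if Nat.eqb k j then cpowR (INR (p ^ j)) (Copp s) else RtoC 0)).
  { apply single_cs. }
  apply functional_extensionality. intro m. unfold single, basis, num_pow.
  destruct (Nat.eqb_spec m (p ^ j)).
  - subst m. destruct (Nat.eqb_spec k j).
    + subst k. rewrite Nat.eqb_refl. rewrite Cmult_1_l, <- Cmult_assoc, <- RtoC_mult.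
      rewrite Rinv_l by apply INR_fact_neq_0. rewrite Cmult_1_r. reflexivity.
    + destruct (Nat.eqb_spec (p ^ j) (p ^ k)).
      * exfalso. apply n. symmetry. exact (Nat.pow_inj_r _ _ _ Hp e).
      * rewrite ?Cmult_0_r, ?Cmult_0_l, ?Cmult_0_r. reflexivity.
  - rewrite ?Cmult_0_l, ?Cmult_0_r, ?Cmult_0_l. reflexivity.
Qed.

Lemma zeta_val p s : zeta_p p s = Cinv (Cminus (RtoC 1) (cpowR (INR p) (Copp s))).
Proof.
  unfold zeta_p, braket.
  rewrite (CSeries_eq _ (Cmult (Cinv (Cminus (RtoC 1) (cpowR (INR p) (Copp s))))
                               (RtoC (INR (fact p))))).
  - rewrite Cmult_comm, <- Cmult_assoc, <- RtoC_mult.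
    rewrite Rinv_r by apply INR_fact_neq_0. apply Cmult_1_r.
  - replace (fun m => _) with (single p (Cmult (Cinv (Cminus (RtoC 1) (cpowR (INR p) (Copp s))))
                               (RtoC (INR (fact p))))).
    { apply single_cs. }
    apply functional_extensionality. intro m. unfold single, basis, num_resolvent.
    destruct (Nat.eqb_spec m p).
    + subst m. rewrite Cmult_1_l, Cmult_1_r. reflexivity.
    + rewrite ?Cmult_0_l, ?Cmult_0_r, ?Cmult_0_l. reflexivity.
Qed.

Theorem mainTheorem7 (p : nat) (s : C) :
  prime (Z.of_nat p) -> 1 < Re s ->
  (forall j : nat, ex_cseries (fun k => rhs_term p s j k)) /\
  is_cseries (fun j => CSeries (fun k => rhs_term p s j k)) (zeta_p p s).
Proof.
  intros Hpr Hs.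
  assert (Hp : (1 < p)%nat) by (pose proof (prime_ge_2 _ Hpr); lia).
  assert (Hinner : forall j, is_cseries (fun k => rhs_term p s j k)
                               (cpowR (INR (p ^ j)) (Copp s))).
  { intro j. replace (fun k => rhs_term p s j k)
      with (single j (cpowR (INR (p ^ j)) (Copp s))).
    { apply single_cs. }
    apply functional_extensionality. intro k. rewrite rhs_term_val by exact Hp.
    reflexivity. }
  split.
  - intro j. eexists. apply Hinner.
  - assert (HpR : 0 < INR p) by (apply lt_0_INR; lia).
    replace (fun j => CSeries (fun k => rhs_term p s j k))
      with (fun j => Cpow (cpowR (INR p) (Copp s)) j).
    2:{ apply functional_extensionality. intro j. rewrite (CSeries_eq _ _ (Hinner j)).
        rewrite pow_INR, cpowR_pow by exact HpR. reflexivity. }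
    rewrite zeta_val. apply geom_cs.
    rewrite Cmod_cpowR. rewrite <- exp_0. apply exp_increasing.
    assert (0 < ln (INR p)).
    { rewrite <- ln_1. apply ln_increasing; [lra|]. apply lt_1_INR. exact Hp. }
    simpl Re. unfold Re in Hs. nra.
Qed.
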